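(* Let $\mathbf x\in\mathcal D^m$ have finite quadratic variation along $\pi$, i.e. $\mathbf q_n(t)=\sum_{i:\,t^n_i\le t}(\mathbf{x}(t^n_{i+1})-\mathbf{x}(t^n_i))(\mathbf{x}(t^n_{i+1})-\mathbf{x}(t^n_i))^T$ converges in $(\mathcal D^{m\times m},d)$ to a limit $[\mathbf x]_\pi$. Then: (i) $\mathbf q_n\to[\mathbf x]_\pi$ locally uniformly on $[0,\infty)$ if and only if $\mathbf x$ is continuous; (ii) $F(\mathbf q_n)\to F([\mathbf x]_\pi)$ for every functional $F$ on $\mathcal D^{m\times m}$ which is $J_1$-continuous at $[\mathbf x]_\pi$.
   Context: Let $\pi=(\pi_n)_{n\ge1}$ be a sequence of partitions $\pi_n=(t^n_0,\dots,t^n_{k_n})$ with $0=t^n_0<\dots<t^n_{k_n}<\infty$, $t^n_{k_n}\uparrow\infty$, and mesh tending to $0$ on compacts; sums over $i$ run over $0\le i<k_n$. $\mathcal D^m$, $\mathcal D^{m\times m}$ denote the spaces of càdlàg functions $[0,\infty)\to\mathbb R^m$, resp. $\mathbb R^{m\times m}$, each with a metric $d$ inducing the Skorokhod $J_1$ topology. *)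

(* Defs.v *)
From Stdlib Require Import Reals List.
Open Scope R_scope.

(* A partition sequence pi = (pi_n): p n i = t^n_i, k n = k_n. *)
Definition partition_seq (p : nat -> nat -> R) (k : nat -> nat) : Prop :=
  (forall n, p n 0%nat = 0) /\
  (forall n i, (i < k n)%nat -> p n i < p n (S i)) /\
  (forall n, p n (k n) <= p (S n) (k (S n))) /\
  (forall M, exists N, forall n, (N <= n)%nat -> M < p n (k n)) /\
  (forall T eps, 0 < eps -> exists N, forall n, (N <= n)%nat ->
     forall i, (i < k n)%nat -> p n i <= T -> p n (S i) - p n i <= eps).

(* A cadlag function [0,oo) -> R^I, restricted to indices satisfying P,
   represented as f : R -> I -> R (values at t < 0 irrelevant). *)
Definition cadlag {I : Type} (P : I -> Prop) (f : R -> I -> R) : Prop :=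
  forall j, P j ->
    (forall t, 0 <= t -> forall eps, 0 < eps -> exists delta, 0 < delta /\
       forall s, t <= s < t + delta -> Rabs (f s j - f t j) < eps) /\
    (forall t, 0 < t -> exists l, forall eps, 0 < eps -> exists delta, 0 < delta /\
       forall s, 0 <= s -> t - delta < s < t -> Rabs (f s j - l) < eps).

Definition time_change (lam : R -> R) : Prop :=
  lam 0 = 0 /\
  (forall s t, 0 <= s -> s < t -> lam s < lam t) /\
  (forall t, 0 <= t -> forall eps, 0 < eps -> exists delta, 0 < delta /\
     forall s, 0 <= s -> Rabs (s - t) < delta -> Rabs (lam s - lam t) < eps) /\
  (forall u, 0 <= u -> exists t, 0 <= t /\ lam t = u).

(* Convergence in the Skorokhod J1 topology on D([0,oo), R^I)
   (Jacod-Shiryaev, Thm VI.1.14): there are time changes lam_n with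
   sup_t |lam_n t - t| -> 0 and f_n o lam_n -> f uniformly on compacts. *)
Definition J1_conv {I : Type} (P : I -> Prop)
    (fn : nat -> R -> I -> R) (f : R -> I -> R) : Prop :=
  exists lam : nat -> R -> R,
    (forall n, time_change (lam n)) /\
    (forall eps, 0 < eps -> exists N, forall n, (N <= n)%nat ->
       forall t, 0 <= t -> Rabs (lam n t - t) <= eps) /\
    (forall T eps, 0 < eps -> exists N, forall n, (N <= n)%nat ->
       forall t j, 0 <= t <= T -> P j -> Rabs (fn n (lam n t) j - f t j) <= eps).

Definition loc_unif_conv {I : Type} (P : I -> Prop)
    (fn : nat -> R -> I -> R) (f : R -> I -> R) : Prop :=
  forall T eps, 0 < eps -> exists N, forall n, (N <= n)%nat ->
    forall t j, 0 <= t <= T -> P j -> Rabs (fn n t j - f t j) <= eps.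

Definition continuous_on_Rplus {I : Type} (P : I -> Prop) (f : R -> I -> R) : Prop :=
  forall j, P j -> forall t, 0 <= t -> forall eps, 0 < eps -> exists delta, 0 < delta /\
    forall s, 0 <= s -> Rabs (s - t) < delta -> Rabs (f s j - f t j) < eps.

(* J1-continuity of a functional at a point of D (the J1 topology is
   metrizable, so sequential continuity is continuity). *)
Definition J1_continuous_at {I : Type} (P : I -> Prop)
    (F : (R -> I -> R) -> R) (f : R -> I -> R) : Prop :=
  forall yn : nat -> R -> I -> R,
    (forall n, cadlag P (yn n)) -> J1_conv P yn f -> Un_cv (fun n => F (yn n)) (F f).

(* Index sets: components j < m of R^m, entries (j,l) of m x m matrices. *)
Definition vidx (m : nat) (j : nat) : Prop := (j < m)%nat.
Definition midx (m : nat) (jl : nat * nat) : Prop := (fst jl < m)%nat /\ (snd jl < m)%nat.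

Definition qv_approx (p : nat -> nat -> R) (k : nat -> nat) (x : R -> nat -> R)
    (n : nat) (t : R) (jl : nat * nat) : R :=
  fold_right Rplus 0
    (map (fun i => if Rle_dec (p n i) t then
            (x (p n (S i)) (fst jl) - x (p n i) (fst jl)) *
            (x (p n (S i)) (snd jl) - x (p n i) (snd jl)) else 0)
       (seq 0 (k n))).

(* Main.v *)
Require Import Defs.
From Stdlib Require Import Reals List Lra Lia.
Open Scope R_scope.

Definition sumf (K : nat) (f : nat -> R) : R := fold_right Rplus 0 (map f (seq 0 K)).

Lemma fold_plus_acc : forall l a, fold_right Rplus a l = a + fold_right Rplus 0 l.
Proof. induction l; simpl; intros; [lra| rewrite IHl; lra]. Qed.

Lemma sumf_S K f : sumf (S K) f = sumf K f + f K.
Proof. unfold sumf. rewrite seq_S, map_app, fold_right_app. simpl.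
 rewrite fold_plus_acc. lra. Qed.

Lemma sumf_ext K f g : (forall i, (i<K)%nat -> f i = g i) -> sumf K f = sumf K g.
Proof. induction K; intros H; [reflexivity|]. rewrite !sumf_S. rewrite (H K) by lia.
 rewrite IHK; [reflexivity|intros; apply H; lia]. Qed.

Lemma sumf_minus K f g : sumf K f - sumf K g = sumf K (fun i => f i - g i).
Proof. induction K; [unfold sumf; simpl; lra|]. rewrite !sumf_S. rewrite <- IHK. lra. Qed.

Lemma sumf_nonneg K f : (forall i, (i<K)%nat -> 0 <= f i) -> 0 <= sumf K f.
Proof. induction K; intros H; [unfold sumf; simpl; lra|]. rewrite sumf_S.
 assert (0 <= f K) by (apply H; lia). assert (0 <= sumf K f) by (apply IHK; intros; apply H; lia). lra. Qed.

Lemma sumf_ge K f i0 : (forall i, (i<K)%nat -> 0 <= f i) -> (i0<K)%nat -> f i0 <= sumf K f.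
Proof. induction K; intros H Hi; [lia|]. rewrite sumf_S.
 assert (0 <= f K) by (apply H; lia). assert (0 <= sumf K f) by (apply sumf_nonneg; intros; apply H; lia).
 destruct (Nat.eq_dec i0 K). subst; lra.
 assert (f i0 <= sumf K f) by (apply IHK; [intros; apply H; lia| lia]). lra. Qed.

Lemma sumf_unique K f : (forall i j, (i<K)%nat -> (j<K)%nat -> f i <> 0 -> f j <> 0 -> i = j) ->
  sumf K f = 0 \/ exists i0, (i0<K)%nat /\ sumf K f = f i0.
Proof. induction K; intros H. left; reflexivity. rewrite sumf_S.
 destruct IHK as [H0|[i0 [Hi0 H0]]]. intros; apply H; auto; lia.
 right; exists K; split; [lia|]; lra.
 destruct (Req_dec (f K) 0). right; exists i0; split; [lia|lra].
 destruct (Req_dec (f i0) 0). right; exists K; split; [lia| lra].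
 exfalso. assert (i0 = K) by (apply H; auto; lia). lia. Qed.

Lemma sumf_unique_bound K f B : (forall i j, (i<K)%nat -> (j<K)%nat -> f i <> 0 -> f j <> 0 -> i = j) ->
  (forall i, (i<K)%nat -> Rabs (f i) <= B) -> 0 <= B -> Rabs (sumf K f) <= B.
Proof. intros H1 H2 H3. destruct (sumf_unique K f H1) as [H|[i0 [Hi H]]]; rewrite H.
 rewrite Rabs_R0; auto. apply H2; auto. Qed.

Lemma gap K (g : nat -> R) t : exists d, 0 < d /\ forall i, (i < K)%nat -> g i <> t -> d <= Rabs (g i - t).
Proof. induction K. exists 1; split; [lra| intros; lia]. destruct IHK as [d [Hd H]].
 destruct (Req_dec (g K) t). exists d; split; auto; intros i Hi Hne.
 destruct (Nat.eq_dec i K); [subst; contradiction| apply H; auto; lia].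
 exists (Rmin d (Rabs (g K - t))). split. apply Rmin_pos; auto. apply Rabs_pos_lt; lra.
 intros i Hi Hne. destruct (Nat.eq_dec i K). subst; apply Rmin_r.
 eapply Rle_trans; [apply Rmin_l | apply H; auto; lia]. Qed.

Lemma p_mono p k : partition_seq p k -> forall n i j, (i<j)%nat -> (j <= k n)%nat -> p n i < p n j.
Proof. intros [H0 [Hinc _]] n i j. induction j; intros Hij Hjk. lia.
 destruct (Nat.eq_dec i j). subst. apply Hinc; lia.
 apply Rlt_trans with (p n j). apply IHj; lia. apply Hinc; lia. Qed.

Lemma p_nonneg p k : partition_seq p k -> forall n i, (i <= k n)%nat -> 0 <= p n i.
Proof. intros Hp n i Hi. destruct i. rewrite (proj1 Hp); lra.
 left. rewrite <- ((proj1 Hp) n). apply (p_mono p k Hp); lia. Qed.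

Lemma find_int (g : nat -> R) t0 K : g 0%nat < t0 -> t0 <= g K -> exists i, (i<K)%nat /\ g i < t0 <= g (S i).
Proof. induction K; intros. lra. destruct (Rlt_le_dec (g K) t0). exists K; split; [lia|lra].
 destruct IHK as [i [Hi H']]; auto. exists i; split; [lia|auto]. Qed.

Lemma fin1 (Q : nat -> nat -> Prop) a : (forall j, (j < a)%nat -> exists N, forall n, (N <= n)%nat -> Q j n) ->
  exists N, forall n, (N <= n)%nat -> forall j, (j < a)%nat -> Q j n.
Proof. induction a; intros H. exists 0%nat; intros; lia.
 destruct IHa as [N1 H1]. intros; apply H; lia. destruct (H a) as [N2 H2]; [lia|].
 exists (max N1 N2). intros n Hn j Hj. destruct (Nat.eq_dec j a). subst; apply H2; lia. apply H1; lia. Qed.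

Lemma fin2 m (Q : nat*nat -> nat -> Prop) : (forall jl, midx m jl -> exists N, forall n, (N<=n)%nat -> Q jl n) ->
  exists N, forall n, (N<=n)%nat -> forall jl, midx m jl -> Q jl n.
Proof. intros H. destruct (fin1 (fun j n => forall l, (l<m)%nat -> Q (j,l) n) m) as [N HN].
 intros j Hj. apply (fin1 (fun l n => Q (j,l) n) m). intros l Hl. apply H. split; simpl; auto.
 exists N. intros n Hn [j l] [Hj Hl]; simpl in *. apply HN; auto. Qed.

Definition cc (p : nat -> nat -> R) (x : R -> nat -> R) n (jl : nat*nat) i : R :=
  (x (p n (S i)) (fst jl) - x (p n i) (fst jl)) * (x (p n (S i)) (snd jl) - x (p n i) (snd jl)).

Lemma qv_eq p k x n t jl : qv_approx p k x n t jl = sumf (k n) (fun i => if Rle_dec (p n i) t then cc p x n jl i else 0).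
Proof. reflexivity. Qed.

Lemma abs_le_inv a b : Rabs a <= b -> -b <= a <= b.
Proof. unfold Rabs; destruct (Rcase_abs a); lra. Qed.
Lemma abs_lt_inv a b : Rabs a < b -> -b < a < b.
Proof. unfold Rabs; destruct (Rcase_abs a); lra. Qed.
Lemma abs_le_intro a b : -b <= a <= b -> Rabs a <= b.
Proof. unfold Rabs; destruct (Rcase_abs a); lra. Qed.
Lemma abs_lt_intro a b : -b < a < b -> Rabs a < b.
Proof. unfold Rabs; destruct (Rcase_abs a); lra. Qed.

Ltac nle := repeat match goal with H : ~ (_ <= _) |- _ => apply Rnot_le_lt in H
  | H : ~ (_ < _) |- _ => apply Rnot_lt_le in H end.

Lemma q_cadlag p k x (P : nat*nat -> Prop) n : cadlag P (qv_approx p k x n).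
Proof. intros jl _. split.
 - intros t _ eps Heps. destruct (gap (k n) (p n) t) as [d [Hd Hg]]. exists d. split; auto.
   intros s Hs. rewrite !qv_eq.
   rewrite (sumf_ext _ (fun i => if Rle_dec (p n i) s then cc p x n jl i else 0)
     (fun i => if Rle_dec (p n i) t then cc p x n jl i else 0)).
   rewrite Rminus_diag, Rabs_R0; auto.
   intros i Hi. destruct (Rle_dec (p n i) s), (Rle_dec (p n i) t); nle; auto; try lra.
   assert (d <= Rabs (p n i - t)) by (apply Hg; auto; lra).    rewrite Rabs_right in H by lra. lra.
 - intros t Ht. exists (sumf (k n) (fun i => if Rlt_dec (p n i) t then cc p x n jl i else 0)).
   intros eps Heps. destruct (gap (k n) (p n) t) as [d [Hd Hg]]. exists d. split; auto.
   intros s Hs0 Hs. rewrite qv_eq.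
   rewrite (sumf_ext _ (fun i => if Rle_dec (p n i) s then cc p x n jl i else 0)
     (fun i => if Rlt_dec (p n i) t then cc p x n jl i else 0)).
   rewrite Rminus_diag, Rabs_R0; auto.
   intros i Hi. destruct (Rle_dec (p n i) s), (Rlt_dec (p n i) t); nle; auto; try lra.
   assert (d <= Rabs (p n i - t)) by (apply Hg; auto; lra).
   rewrite Rabs_left in H by lra. lra.
Qed.

Lemma Qx_cont m p k x Qx : partition_seq p k -> continuous_on_Rplus (vidx m) x -> cadlag (midx m) Qx ->
  J1_conv (midx m) (qv_approx p k x) Qx -> continuous_on_Rplus (midx m) Qx.
Proof.
 intros Hp Hx HQ [lam [Hlam [Hl1 Hl2]]] jl Hjl t0 Ht0 eps Heps.
 destruct (HQ jl Hjl) as [HR HL]. destruct (HR t0 Ht0 eps Heps) as [dr [Hdr Hr]].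
 destruct (Req_dec t0 0) as [Ht00|Hne].
 - subst t0. exists dr. split; auto. intros s Hs Hsd. apply Hr. apply abs_lt_inv in Hsd. lra.
 - assert (Ht0p : 0 < t0) by lra.
   destruct (HL t0 Ht0p) as [L HLl].
   assert (Hb : forall e, 0 < e -> Rabs (Qx t0 jl - L) <= 4*e).
   { intros e He. destruct jl as [j l]. destruct Hjl as [Hj Hl]; simpl in Hj, Hl.
     set (al := Rmin 1 (e/4)).
     assert (Hal : 0 < al) by (apply Rmin_pos; lra).
     assert (Hal1 : al <= 1) by apply Rmin_l. assert (Hal2 : al <= e/4) by apply Rmin_r.
     destruct (Hx j Hj t0 Ht0 al Hal) as [ej [Hej Hxj]].
     destruct (Hx l Hl t0 Ht0 al Hal) as [el [Hel Hxl]].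
     set (eta := Rmin 1 (Rmin ej el)).
     assert (Heta : 0 < eta) by (apply Rmin_pos; [lra| apply Rmin_pos; auto]).
     assert (Heta1 : eta <= 1) by apply Rmin_l.
     assert (Hetaj : eta <= ej) by (eapply Rle_trans; [apply Rmin_r| apply Rmin_l]).
     assert (Hetal : eta <= el) by (eapply Rle_trans; [apply Rmin_r| apply Rmin_r]).
     destruct (Hl1 (eta/4)) as [N1 HN1]; [lra|].
     destruct (Hl2 t0 e He) as [N2 HN2].
     pose proof Hp as [Hp0 [Hpinc [_ [_ Hmesh]]]].
     destruct (Hmesh (t0+1) (eta/4)) as [N3 HN3]; [lra|].
     set (n := max N1 (max N2 N3)).
     set (u := lam n t0).
     assert (Hu : Rabs (u - t0) <= eta/4) by (apply HN1; [lia|lra]).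
     apply abs_le_inv in Hu.
     destruct (gap (k n) (p n) u) as [d [Hd Hg]].
     destruct (HLl e He) as [dL [HdL HLe]].
     destruct (Hlam n) as [_ [Hinc [Hcont _]]].
     destruct (Hcont t0 Ht0 d Hd) as [dl [Hdl Hcl]].
     set (w := Rmin t0 (Rmin dL dl)).
     assert (Hw : 0 < w) by (apply Rmin_pos; [lra| apply Rmin_pos; auto]).
     assert (Hw1 : w <= t0) by apply Rmin_l.
     assert (Hw2 : w <= dL) by (eapply Rle_trans; [apply Rmin_r| apply Rmin_l]).
     assert (Hw3 : w <= dl) by (eapply Rle_trans; [apply Rmin_r| apply Rmin_r]).
     set (s := t0 - w/2).
     assert (Hvu : lam n s < u) by (apply Hinc; unfold s; lra).
     assert (Hvd : Rabs (lam n s - u) < d) by (apply Hcl; [unfold s; lra| apply abs_lt_intro; unfold s; lra]).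
     apply abs_lt_inv in Hvd.
     set (v := lam n s) in *.
     assert (Hdiff : qv_approx p k x n u (j,l) - qv_approx p k x n v (j,l) =
        sumf (k n) (fun i => if Req_EM_T (p n i) u then cc p x n (j,l) i else 0)).
     { rewrite !qv_eq, sumf_minus. apply sumf_ext. intros i Hi.
       destruct (Rle_dec (p n i) u), (Rle_dec (p n i) v), (Req_EM_T (p n i) u); nle; try lra.
       assert (d <= Rabs (p n i - u)) by (apply Hg; auto).
       rewrite Rabs_left in H by lra. lra. }
     assert (Hjump : Rabs (qv_approx p k x n u (j,l) - qv_approx p k x n v (j,l)) <= e).
     { rewrite Hdiff. apply sumf_unique_bound; [| |lra].
       - intros i i' Hi Hi' H1 H2.
         destruct (Req_EM_T (p n i) u); [|lra]. destruct (Req_EM_T (p n i') u); [|lra].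
         destruct (Nat.lt_trichotomy i i') as [Hlt|[Heq|Hlt]]; auto.
         + assert (p n i < p n i') by (apply (p_mono p k Hp) ; lia). lra.
         + assert (p n i' < p n i) by (apply (p_mono p k Hp) ; lia). lra.
       - intros i Hi. destruct (Req_EM_T (p n i) u) as [Hpi|Hpi]; [|rewrite Rabs_R0; lra].
         assert (Hm : p n (S i) - p n i <= eta/4) by (apply HN3; [lia|auto|lra]).
         assert (Hq0 : 0 <= p n i) by (apply (p_nonneg p k Hp); lia).
         assert (Hq1 : p n i < p n (S i)) by (apply Hpinc; auto).
         assert (A1 : Rabs (x (p n i) j - x t0 j) < al) by (apply Hxj; [lra| apply abs_lt_intro; lra]).
         assert (A2 : Rabs (x (p n (S i)) j - x t0 j) < al) by (apply Hxj; [lra| apply abs_lt_intro; lra]).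
         assert (A3 : Rabs (x (p n i) l - x t0 l) < al) by (apply Hxl; [lra| apply abs_lt_intro; lra]).
         assert (A4 : Rabs (x (p n (S i)) l - x t0 l) < al) by (apply Hxl; [lra| apply abs_lt_intro; lra]).
         apply abs_lt_inv in A1, A2, A3, A4.
         unfold cc; simpl fst; simpl snd. rewrite Rabs_mult.
         set (a := x (p n (S i)) j - x (p n i) j). set (b := x (p n (S i)) l - x (p n i) l).
         assert (Ha : Rabs a <= 2*al) by (apply abs_le_intro; unfold a; lra).
         assert (Hb : Rabs b <= 2*al) by (apply abs_le_intro; unfold b; lra).
         assert (Rabs a * Rabs b <= (2*al)*(2*al)) by (apply Rmult_le_compat; auto; apply Rabs_pos).
         nra. }
     assert (Hmj : midx m (j,l)) by (split; simpl; auto).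
     assert (H1 : Rabs (qv_approx p k x n u (j,l) - Qx t0 (j,l)) <= e) by (apply HN2; [lia|lra|auto]).
     assert (H2 : Rabs (qv_approx p k x n v (j,l) - Qx s (j,l)) <= e) by (apply HN2; [lia|unfold s; lra|auto]).
     assert (H3 : Rabs (Qx s (j,l) - L) < e) by (apply HLe; unfold s; lra).
     apply abs_le_inv in H1, H2, Hjump. apply abs_lt_inv in H3.
     apply abs_le_intro. lra. }
   assert (HLeq : L = Qx t0 jl).
   { destruct (Req_dec L (Qx t0 jl)) as [|Hn]; auto. exfalso.
     assert (Hpos : 0 < Rabs (Qx t0 jl - L)) by (apply Rabs_pos_lt; lra).
     assert (Rabs (Qx t0 jl - L) <= 4 * (Rabs (Qx t0 jl - L) / 8)) by (apply Hb; lra). lra. }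
   destruct (HLl eps Heps) as [dl [Hdl Hll]].
   exists (Rmin dr dl). split. apply Rmin_pos; auto.
   intros s Hs Hsd. apply abs_lt_inv in Hsd.
   assert (Rmin dr dl <= dr) by apply Rmin_l. assert (Rmin dr dl <= dl) by apply Rmin_r.
   destruct (Rlt_or_le s t0).
   + rewrite <- HLeq. apply Hll; lra.
   + apply Hr; lra.
Qed.

Lemma cont_ext m (Qx : R -> nat*nat -> R) jl : continuous_on_Rplus (midx m) Qx -> midx m jl ->
  forall u, continuity_pt (fun u => Qx (Rmax 0 u) jl) u.
Proof.
 intros Hc Hjl u. unfold continuity_pt, continue_in, limit1_in, limit_in. simpl. unfold R_dist.
 intros eps Heps. destruct (Rlt_le_dec u 0).
 - exists (-u). split; [lra|]. intros y [_ Hy]. apply abs_lt_inv in Hy.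
   rewrite !Rmax_left by lra. rewrite Rminus_diag, Rabs_R0; auto.
 - destruct (Hc jl Hjl u r eps Heps) as [d [Hd H]]. exists d. split; [lra|].
   intros y [_ Hy]. apply abs_lt_inv in Hy. rewrite (Rmax_right 0 u) by lra.
   apply H. apply Rmax_l. apply abs_lt_intro. unfold Rmax; destruct (Rle_dec 0 y); lra.
Qed.

Lemma unif_from_cont m p k x Qx : continuous_on_Rplus (midx m) Qx ->
  J1_conv (midx m) (qv_approx p k x) Qx -> loc_unif_conv (midx m) (qv_approx p k x) Qx.
Proof.
 intros Hc [lam [Hlam [Hl1 Hl2]]] T eps Heps.
 destruct (fin2 m (fun jl n => forall t, 0 <= t <= T -> Rabs (qv_approx p k x n t jl - Qx t jl) <= eps))
   as [N HN].
 - intros jl Hjl.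
   pose proof (Heine (fun u => Qx (Rmax 0 u) jl) (fun c => 0 <= c <= T+1) (compact_P3 0 (T+1))
     (fun u _ => cont_ext m Qx jl Hc Hjl u)) as HU.
   destruct (HU (mkposreal (eps/2) ltac:(lra))) as [[dl Hdl] HD]. simpl in HD.
   destruct (Hl1 (Rmin (dl/2) 1)) as [N1 HN1]. apply Rmin_pos; lra.
   destruct (Hl2 (T+1) (eps/2)) as [N2 HN2]; [lra|].
   exists (max N1 N2). intros n Hn t Ht.
   destruct (Hlam n) as [_ [_ [_ Hsurj]]]. destruct (Hsurj t) as [s [Hs0 Hs]]; [lra|].
   assert (Hls : Rabs (lam n s - s) <= Rmin (dl/2) 1) by (apply HN1; [lia|auto]).
   assert (Rmin (dl/2) 1 <= dl/2) by apply Rmin_l. assert (Rmin (dl/2) 1 <= 1) by apply Rmin_r.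
   rewrite Hs in Hls. apply abs_le_inv in Hls.
   assert (E1 : Rabs (qv_approx p k x n (lam n s) jl - Qx s jl) <= eps/2) by (apply HN2; [lia|lra|auto]).
   rewrite Hs in E1.
   assert (E2 : Rabs (Qx (Rmax 0 s) jl - Qx (Rmax 0 t) jl) < eps/2) by (apply HD; [lra|lra|apply abs_lt_intro; lra]).
   rewrite !Rmax_right in E2 by lra.
   apply abs_le_inv in E1. apply abs_lt_inv in E2. apply abs_le_intro. lra.
 - exists N. intros n Hn t jl Ht Hjl. apply HN; auto.
Qed.

Lemma jump_contra m p k x Qx : partition_seq p k -> cadlag (vidx m) x -> cadlag (midx m) Qx ->
  loc_unif_conv (midx m) (qv_approx p k x) Qx -> continuous_on_Rplus (vidx m) x.
Proof.
 intros Hp Hx HQ Hu j Hj t0 Ht0 eps Heps.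
 destruct (Hx j Hj) as [HR HL]. destruct (HR t0 Ht0 eps Heps) as [dr [Hdr Hr]].
 destruct (Req_dec t0 0) as [Ht00|Hne].
 - subst t0. exists dr. split; auto. intros s Hs Hsd. apply Hr. apply abs_lt_inv in Hsd. lra.
 - assert (Ht0p : 0 < t0) by lra.
   destruct (HL t0 Ht0p) as [L HLl].
   assert (HLeq : L = x t0 j).
   { destruct (Req_dec L (x t0 j)) as [|Hn]; auto. exfalso.
     set (D := Rabs (x t0 j - L)).
     assert (HD : 0 < D) by (apply Rabs_pos_lt; lra).
     assert (Hjj : midx m (j,j)) by (split; simpl; auto).
     destruct (HR t0 Ht0 (D/4)) as [rho [Hrho Hrr]]; [lra|].
     destruct (HLl (D/4)) as [e1 [He1 Hl1]]; [lra|].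
     destruct (HQ (j,j) Hjj) as [_ HQL]. destruct (HQL t0 Ht0p) as [LQ HLQ].
     set (e' := D*D/16).
     assert (He' : 0 < e') by (unfold e'; nra).
     destruct (HLQ e' He') as [e2 [He2 Hl2]].
     set (eta := Rmin (t0/2) (Rmin e1 (Rmin e2 rho))).
     assert (Heta : 0 < eta) by (repeat apply Rmin_pos; lra).
     assert (Heta1 : eta <= t0/2) by apply Rmin_l.
     assert (Heta2 : eta <= e1) by (eapply Rle_trans; [apply Rmin_r| apply Rmin_l]).
     assert (Heta3 : eta <= e2) by (eapply Rle_trans; [apply Rmin_r| eapply Rle_trans; [apply Rmin_r|apply Rmin_l]]).
     assert (Heta4 : eta <= rho) by (eapply Rle_trans; [apply Rmin_r| eapply Rle_trans; [apply Rmin_r|apply Rmin_r]]).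
     destruct (Hu t0 e' He') as [N1 HN1].
     pose proof Hp as [Hp0 [Hpinc [_ [Hunb Hmesh]]]].
     destruct (Hmesh t0 (eta/2)) as [N2 HN2]; [lra|].
     destruct (Hunb t0) as [N3 HN3].
     set (n := max N1 (max N2 N3)).
     assert (Hk : t0 < p n (k n)) by (apply HN3; lia).
     destruct (find_int (p n) t0 (k n)) as [i [Hi [Hti Hti1]]]; [rewrite Hp0; lra| lra|].
     assert (Hm : p n (S i) - p n i <= eta/2) by (apply HN2; [lia|auto|lra]).
     assert (A1 : Rabs (x (p n (S i)) j - x t0 j) < D/4) by (apply Hrr; lra).
     assert (Hq0 : 0 <= p n i) by (apply (p_nonneg p k Hp); lia).
     assert (A2 : Rabs (x (p n i) j - L) < D/4) by (apply Hl1; lra).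
     set (u := (t0 - eta + p n i)/2).
     assert (Hc : D*D/4 < cc p x n (j,j) i).
     { unfold cc; simpl fst; simpl snd.
       set (a := x (p n (S i)) j - x (p n i) j).
       assert (D <= Rabs (x t0 j - x (p n (S i)) j) + Rabs a + Rabs (x (p n i) j - L)).
       { unfold D. replace (x t0 j - L) with ((x t0 j - x (p n (S i)) j) + a + (x (p n i) j - L)) by (unfold a; ring).
         eapply Rle_trans; [apply Rabs_triang|]. apply Rplus_le_compat_r. apply Rabs_triang. }
       rewrite Rabs_minus_sym in A1.
       assert (Ha : D/2 < Rabs a) by lra.
       assert (a * a = Rabs a * Rabs a) by (rewrite <- Rabs_mult; rewrite Rabs_right; [ring| nra]).
       rewrite H0. nra. }
     assert (Hge : cc p x n (j,j) i <= qv_approx p k x n (p n i) (j,j) - qv_approx p k x n u (j,j)).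
     { rewrite !qv_eq, sumf_minus.
       eapply Rle_trans; [|apply (sumf_ge (k n) (fun i0 => (if Rle_dec (p n i0) (p n i) then cc p x n (j, j) i0 else 0) -
          (if Rle_dec (p n i0) u then cc p x n (j, j) i0 else 0)) i)].
       - destruct (Rle_dec (p n i) (p n i)), (Rle_dec (p n i) u); nle; unfold u in *; lra.
       - intros i0 Hi0. assert (0 <= cc p x n (j,j) i0) by (unfold cc; simpl fst; simpl snd; apply Rle_0_sqr).
         destruct (Rle_dec (p n i0) (p n i)), (Rle_dec (p n i0) u); nle; unfold u in *; lra.
       - auto. }
     assert (B1 : Rabs (qv_approx p k x n (p n i) (j,j) - Qx (p n i) (j,j)) <= e') by (apply HN1; [lia|lra|auto]).
     assert (B2 : Rabs (qv_approx p k x n u (j,j) - Qx u (j,j)) <= e') by (apply HN1; [lia|unfold u; lra|auto]).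
     assert (B3 : Rabs (Qx (p n i) (j,j) - LQ) < e') by (apply Hl2; lra).
     assert (B4 : Rabs (Qx u (j,j) - LQ) < e') by (apply Hl2; unfold u; lra).
     apply abs_le_inv in B1, B2. apply abs_lt_inv in B3, B4. unfold e' in *. lra. }
   destruct (HLl eps Heps) as [dl [Hdl Hll]].
   exists (Rmin dr dl). split. apply Rmin_pos; auto.
   intros s Hs Hsd. apply abs_lt_inv in Hsd.
   assert (Rmin dr dl <= dr) by apply Rmin_l. assert (Rmin dr dl <= dl) by apply Rmin_r.
   destruct (Rlt_or_le s t0).
   + rewrite <- HLeq. apply Hll; lra.
   + apply Hr; lra.
Qed.

Theorem corollary3p7 (m : nat) (p : nat -> nat -> R) (k : nat -> nat)
  (x : R -> nat -> R) (Qx : R -> nat * nat -> R) :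
  partition_seq p k ->
  cadlag (vidx m) x ->
  cadlag (midx m) Qx ->
  J1_conv (midx m) (qv_approx p k x) Qx ->
  (loc_unif_conv (midx m) (qv_approx p k x) Qx <-> continuous_on_Rplus (vidx m) x) /\
  (forall F : (R -> nat * nat -> R) -> R,
     J1_continuous_at (midx m) F Qx ->
     Un_cv (fun n => F (qv_approx p k x n)) (F Qx)).
Proof.
  intros Hp Hx HQ HJ. split; [split|].
  - intros Hu. apply (jump_contra m p k x Qx); auto.
  - intros Hc. apply unif_from_cont; auto. apply (Qx_cont m p k x Qx); auto.
  - intros F HF. apply HF; auto. intros n. apply q_cadlag.
Qed.
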